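(* Let $\mathsf{G}$ be a global type. If $\mathsf{G}$ is projectable, then its event structure $\mathcal{S}(\mathsf{G})$ is semantically projectable.
   Context: Participants are ranged over by $\mathsf{p},\mathsf{q},\mathsf{r},\mathsf{s}$ and message labels by $\lambda$. Global types are defined coinductively (and assumed regular, i.e. with finitely many distinct subtrees): $\mathsf{G} ::= \mathsf{p}\to\mathsf{q}:\{\lambda_i;\mathsf{G}_i\}_{i\in I} \mid \mathsf{End}$, with $I$ finite non-empty and the $\lambda_i$ pairwise distinct. Processes (coinductive): $P ::= \bigoplus_{i\in I}\mathsf{p}!\lambda_i;P_i \mid \sum_{i\in I}\mathsf{p}?\lambda_i;P_i \mid \mathbf{0}$. A communication is $\alpha=\mathsf{p}\mathsf{q}\lambda$ with $\mathrm{part}(\mathsf{p}\mathsf{q}\lambda)=\{\mathsf{p},\mathsf{q}\}$; a trace is a finite sequence of communications, $\mathrm{part}$ extended to traces by union. $\mathrm{Tr}(\mathsf{End})=\emptyset$, $\mathrm{Tr}(\mathsf{p}\to\mathsf{q}:\{\lambda_i;\mathsf{G}_i\}_{i\in I})=\{\mathsf{p}\mathsf{q}\lambda_i\cdot\sigma\mid i\in I,\ \sigma=\epsilon\text{ or }\sigma\in\mathrm{Tr}(\mathsf{G}_i)\}$, and $\mathrm{part}(\mathsf{G})=\bigcup_{\sigma\in\mathrm{Tr}(\mathsf{G})}\mathrm{part}(\sigma)$. Projection (coinductive, partial): $\mathsf{G}\upharpoonright\mathsf{r}=\mathbf{0}$ if $\mathsf{r}\notin\mathrm{part}(\mathsf{G})$;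 for $\mathsf{G}=\mathsf{p}\to\mathsf{q}:\{\lambda_i;\mathsf{G}_i\}_{i\in I}$: $\mathsf{G}\upharpoonright\mathsf{r}=\sum_{i\in I}\mathsf{p}?\lambda_i;(\mathsf{G}_i\upharpoonright\mathsf{r})$ if $\mathsf{r}=\mathsf{q}$; $=\bigoplus_{i\in I}\mathsf{q}!\lambda_i;(\mathsf{G}_i\upharpoonright\mathsf{r})$ if $\mathsf{r}=\mathsf{p}$; $=\mathsf{G}_1\upharpoonright\mathsf{r}$ if $\mathsf{r}\notin\{\mathsf{p},\mathsf{q}\}$, $\mathsf{r}\in\mathrm{part}(\mathsf{G}_1)$ and $\mathsf{G}_i\upharpoonright\mathsf{r}=\mathsf{G}_1\upharpoonright\mathsf{r}$ for all $i\in I$; undefined otherwise. $\mathsf{G}$ is projectable if $\mathsf{G}\upharpoonright\mathsf{p}$ is defined for all $\mathsf{p}$. Projection of a trace on $\mathsf{r}$: $\epsilon\upharpoonright\mathsf{r}=\epsilon$; $(\mathsf{p}\mathsf{q}\lambda\cdot\sigma)\upharpoonright\mathsf{r}$ equals $\mathsf{q}!\lambda\cdot(\sigma\upharpoonright\mathsf{r})$ if $\mathsf{r}=\mathsf{p}$, $\mathsf{p}?\lambda\cdot(\sigma\upharpoonright\mathsf{r})$ if $\mathsf{r}=\mathsf{q}$, and $\sigma\upharpoonright\mathsf{r}$ otherwise. Event structure of $\mathsf{G}$: permutation equivalence $\sim$ is the least equivalence on traces with $\sigma\cdot\alpha\cdot\alpha'\cdot\sigma'\sim\sigma\cdot\alpha'\cdot\alpha\cdot\sigma'$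 whenever $\mathrm{part}(\alpha)\cap\mathrm{part}(\alpha')=\emptyset$; $[\sigma]$ is the class of $\sigma$. A non-empty trace $\sigma=\sigma[1]\cdots\sigma[n]$ is pointed if for every $1\le i<n$ there is $j$ with $i<j\le n$ and $\mathrm{part}(\sigma[i])\cap\mathrm{part}(\sigma[j])\ne\emptyset$. A g-event is $[\sigma]$ with $\sigma$ pointed; its communication $\mathrm{cm}([\sigma])$ is the last element of $\sigma$ (independent of the representative). Causal prefixing: $\alpha\circ[\sigma]=[\alpha\cdot\sigma]$ if $\mathrm{part}(\alpha)\cap\mathrm{part}(\sigma)\ne\emptyset$, $=[\sigma]$ otherwise; $\epsilon\circ\gamma=\gamma$, $(\alpha\cdot\sigma)\circ\gamma=\alpha\circ(\sigma\circ\gamma)$. $\mathrm{ev}(\sigma\cdot\alpha)=\sigma\circ[\alpha]$. Causality: $\gamma\le\gamma'$ if $\gamma=[\sigma]$ and $\gamma'=[\sigma\cdot\sigma']$ for some $\sigma,\sigma'$. Conflict: $\gamma\#\gamma'$ if $\gamma=[\sigma\cdot\mathsf{p}\mathsf{q}\lambda_1\cdot\sigma_1]$, $\gamma'=[\sigma\cdot\mathsf{p}\mathsf{q}\lambda_2\cdot\sigma_2]$ with $\lambda_1\ne\lambda_2$. $\mathcal{S}(\mathsf{G})=(\mathcal{E}(\mathsf{G}),\le_{\mathsf{G}},\#_{\mathsf{G}})$ with $\mathcal{E}(\mathsf{G})=\{\mathrm{ev}(\sigma)\mid\sigma\in\mathrm{Tr}(\mathsf{G})\}$ and the relations restricted to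 $\mathcal{E}(\mathsf{G})$. Two events $\gamma_1,\gamma_2\in\mathcal{E}(\mathsf{G})$ are in initial conflict if $\gamma_1=[\sigma\cdot\mathsf{p}\mathsf{q}\lambda_1]$ and $\gamma_2=[\sigma\cdot\mathsf{p}\mathsf{q}\lambda_2]$ for some $\sigma,\mathsf{p},\mathsf{q}$ and $\lambda_1\ne\lambda_2$. $\mathcal{S}(\mathsf{G})$ is semantically projectable if for all $\gamma_1,\gamma_2\in\mathcal{E}(\mathsf{G})$ in initial conflict the following holds: whenever there is $\gamma_1'=[\sigma_1\cdot\alpha_1]\in\mathcal{E}(\mathsf{G})$ with $\gamma_1\le_{\mathsf{G}}\gamma_1'$ and a participant $\mathsf{r}\in\mathrm{part}(\alpha_1)\setminus\mathrm{part}(\mathrm{cm}(\gamma_1))$, there is $\gamma_2'=[\sigma_2\cdot\alpha_2]\in\mathcal{E}(\mathsf{G})$ with $\gamma_2\le_{\mathsf{G}}\gamma_2'$, $\alpha_2=\alpha_1$ and $\sigma_2\upharpoonright\mathsf{r}=\sigma_1\upharpoonright\mathsf{r}$. *)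

(* Defs.v *)
From Stdlib Require Import List Relations Arith.
Import ListNotations.

Definition participant := nat.
Definition label := nat.

(** Global types (coinductive trees). A branch list [(l_i, G_i)]_i represents
    {l_i; G_i}_{i in I}; "G_1" is the head of the list. *)
CoInductive gtype : Type :=
| GEnd : gtype
| GMsg : participant -> participant -> list (label * gtype) -> gtype.

(** Processes (coinductive trees). [PSend q bs] is (+)_i q!l_i;P_i,
    [PRecv p bs] is Sum_i p?l_i;P_i, [PEnd] is 0. *)
CoInductive process : Type :=
| PEnd : process
| PSend : participant -> list (label * process) -> process
| PRecv : participant -> list (label * process) -> process.

Inductive subtree : gtype -> gtype -> Prop :=
| st_refl G : subtree G G
| st_child p q bs l G' H :
    In (l, G') bs -> subtree G' H -> subtree (GMsg p q bs) H.

CoInductive gbisim : gtype -> gtype -> Prop :=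
| gb_end : gbisim GEnd GEnd
| gb_msg p q bs bs' :
    Forall2 (fun b b' => fst b = fst b' /\ gbisim (snd b) (snd b')) bs bs' ->
    gbisim (GMsg p q bs) (GMsg p q bs').

(** Well-formedness from the grammar: every branching has a finite non-empty
    set of pairwise distinct labels. *)
Definition gwf (G : gtype) : Prop :=
  forall H p q bs, subtree G H -> H = GMsg p q bs ->
    bs <> [] /\ NoDup (map fst bs).

Definition gregular (G : gtype) : Prop :=
  exists l : list gtype, forall H, subtree G H -> exists H', In H' l /\ gbisim H H'.

Definition comm := (participant * participant * label)%type.

Definition cparts (a : comm) : list participant :=
  let '(p, q, _) := a in [p; q].

Definition tparts (s : list comm) : list participant := flat_map cparts s.

Inductive trace_of : gtype -> list comm -> Prop :=
| tr_one p q bs l G' :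
    In (l, G') bs -> trace_of (GMsg p q bs) [(p, q, l)]
| tr_cons p q bs l G' s :
    In (l, G') bs -> trace_of G' s -> trace_of (GMsg p q bs) ((p, q, l) :: s).

Definition in_part (r : participant) (G : gtype) : Prop :=
  exists s, trace_of G s /\ In r (tparts s).

CoInductive proj : gtype -> participant -> process -> Prop :=
| proj_out G r :
    ~ in_part r G -> proj G r PEnd
| proj_recv p q bs r Ps :
    in_part r (GMsg p q bs) -> r = q ->
    Forall2 (fun b c => fst b = fst c /\ proj (snd b) r (snd c)) bs Ps ->
    proj (GMsg p q bs) r (PRecv p Ps)
| proj_send p q bs r Ps :
    in_part r (GMsg p q bs) -> r <> q -> r = p ->
    Forall2 (fun b c => fst b = fst c /\ proj (snd b) r (snd c)) bs Ps ->
    proj (GMsg p q bs) r (PSend q Ps)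
| proj_skip p q l1 G1 bs' r P :
    in_part r (GMsg p q ((l1, G1) :: bs')) -> r <> q -> r <> p ->
    in_part r G1 ->
    Forall (fun b => proj (snd b) r P) ((l1, G1) :: bs') ->
    proj (GMsg p q ((l1, G1) :: bs')) r P.

Definition projectable (G : gtype) : Prop :=
  forall r, exists P, proj G r P.

Inductive action : Type :=
| ASend : participant -> label -> action
| ARecv : participant -> label -> action.

Fixpoint tproj (s : list comm) (r : participant) : list action :=
  match s with
  | [] => []
  | (p, q, l) :: s' =>
      if Nat.eqb r p then ASend q l :: tproj s' r
      else if Nat.eqb r q then ARecv p l :: tproj s' r
      else tproj s' r
  end.

Definition disjoint (l1 l2 : list participant) : Prop :=
  forall x, In x l1 -> In x l2 -> False.

Inductive swap_step : list comm -> list comm -> Prop :=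
| sw s a b s' :
    disjoint (cparts a) (cparts b) ->
    swap_step (s ++ a :: b :: s') (s ++ b :: a :: s').

Definition perm_equiv : list comm -> list comm -> Prop :=
  clos_refl_sym_trans (list comm) swap_step.

(** Causal prefixing on representatives: a o [s] = [a.s] if part(a) meets
    part(s), [s] otherwise; (a.s) o g = a o (s o g). *)
Definition shares (a : comm) (s : list comm) : bool :=
  existsb (fun x => existsb (Nat.eqb x) (tparts s)) (cparts a).

Fixpoint causal_prefix (s : list comm) (g : list comm) : list comm :=
  match s with
  | [] => g
  | a :: s' =>
      let g' := causal_prefix s' g in
      if shares a g' then a :: g' else g'
  end.

Definition ev (s : list comm) (a : comm) : list comm := causal_prefix s [a].

(** Events are equivalence classes of traces; we handle them through
    representatives. [event G g]: the class [g] belongs to E(G). *)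
Definition event (G : gtype) (g : list comm) : Prop :=
  exists s a, trace_of G (s ++ [a]) /\ perm_equiv g (ev s a).

Definition causal_le (g g' : list comm) : Prop :=
  exists s s', perm_equiv g s /\ perm_equiv g' (s ++ s').

Definition cm (g : list comm) : comm := last g (0, 0, 0).

Definition init_conflict (g1 g2 : list comm) : Prop :=
  exists s p q l1 l2, l1 <> l2 /\
    perm_equiv g1 (s ++ [(p, q, l1)]) /\ perm_equiv g2 (s ++ [(p, q, l2)]).

Definition sem_projectable (G : gtype) : Prop :=
  forall g1 g2, event G g1 -> event G g2 -> init_conflict g1 g2 ->
  forall (s1 : list comm) (a1 : comm) (r : participant),
    event G (s1 ++ [a1]) -> causal_le g1 (s1 ++ [a1]) ->
    In r (cparts a1) -> ~ In r (cparts (cm g1)) ->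
    exists s2 : list comm,
      event G (s2 ++ [a1]) /\ causal_le g2 (s2 ++ [a1]) /\
      tproj s2 r = tproj s1 r.

(* Main.v *)
Require Import Defs.
From Stdlib Require Import List Relations Arith Lia Bool Classical.
Import ListNotations.


Definition involves (z : participant) (c : comm) : bool :=
  match c with (a, b, _) => (z =? a) || (z =? b) end.
Definition hist (z : participant) (W : list comm) := filter (involves z) W.

Lemma in_cparts (z : participant) c : In z (cparts c) <-> involves z c = true.
Proof.
  destruct c as [[a b] l]; simpl. rewrite orb_true_iff, !Nat.eqb_eq. intuition.
Qed.

Lemma in_tparts z W : In z (tparts W) <-> exists c, In c W /\ involves z c = true.
Proof.
  unfold tparts. rewrite in_flat_map. split; intros [c [H1 H2]]; exists c;
  rewrite in_cparts in *; auto.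
Qed.

Lemma tparts_app A B : tparts (A ++ B) = tparts A ++ tparts B.
Proof. unfold tparts. apply flat_map_app. Qed.

Lemma shares_iff a L : shares a L = true <-> exists x, In x (cparts a) /\ In x (tparts L).
Proof.
  unfold shares. rewrite existsb_exists. split; intros [x [H1 H2]]; exists x; split; auto.
  - rewrite existsb_exists in H2. destruct H2 as [y [Hy Hy']]. apply Nat.eqb_eq in Hy'. subst; auto.
  - rewrite existsb_exists. exists x. split; auto. apply Nat.eqb_refl.
Qed.

Lemma shares_ext a L1 L2 : (forall x, In x (tparts L1) <-> In x (tparts L2)) ->
  shares a L1 = shares a L2.
Proof.
  intros H. apply eq_true_iff_eq. rewrite !shares_iff.
  split; intros [x [H1 H2]]; exists x; split; auto; apply H; auto.
Qed.

Lemma disjoint_sym l1 l2 : disjoint l1 l2 -> disjoint l2 l1.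
Proof. unfold disjoint. eauto. Qed.

Definition pe := clos_refl_trans (list comm) swap_step.

Lemma swap_sym x y : swap_step x y -> swap_step y x.
Proof. intros []. constructor. apply disjoint_sym; auto. Qed.

Lemma pe_sym x y : pe x y -> pe y x.
Proof.
  induction 1.
  - apply rt_step, swap_sym; auto.
  - apply rt_refl.
  - eapply rt_trans; eauto.
Qed.

Lemma perm_pe x y : perm_equiv x y -> pe x y.
Proof.
  induction 1.
  - apply rt_step; auto.
  - apply rt_refl.
  - apply pe_sym; auto.
  - eapply rt_trans; eauto.
Qed.

Lemma pe_perm x y : pe x y -> perm_equiv x y.
Proof.
  induction 1.
  - apply rst_step; auto.
  - apply rst_refl.
  - eapply rst_trans; eauto.
Qed.

Lemma swap_app_l l x y : swap_step x y -> swap_step (l ++ x) (l ++ y).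
Proof. intros []. rewrite !app_assoc. constructor; auto. Qed.

Lemma swap_app_r l x y : swap_step x y -> swap_step (x ++ l) (y ++ l).
Proof. intros []. rewrite <- !app_assoc. simpl. constructor; auto. Qed.

Lemma pe_app_l l x y : pe x y -> pe (l ++ x) (l ++ y).
Proof.
  induction 1.
  - apply rt_step, swap_app_l; auto.
  - apply rt_refl.
  - eapply rt_trans; eauto.
Qed.

Lemma pe_app_r l x y : pe x y -> pe (x ++ l) (y ++ l).
Proof.
  induction 1.
  - apply rt_step, swap_app_r; auto.
  - apply rt_refl.
  - eapply rt_trans; eauto.
Qed.

Lemma pe_cons a x y : pe x y -> pe (a :: x) (a :: y).
Proof. apply (pe_app_l [a]). Qed.

Lemma disj_inv a b z : disjoint (cparts a) (cparts b) ->
  involves z a = true -> involves z b = true -> False.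
Proof. intros H H1 H2. apply (H z); apply in_cparts; auto. Qed.

Lemma swap_hist z x y : swap_step x y -> hist z x = hist z y.
Proof.
  intros []. unfold hist. rewrite !filter_app. f_equal. simpl.
  destruct (involves z a) eqn:Ea, (involves z b) eqn:Eb; auto.
  exfalso; eapply disj_inv; eauto.
Qed.

Lemma pe_hist z x y : pe x y -> hist z x = hist z y.
Proof.
  induction 1; auto. apply swap_hist; auto. congruence.
Qed.

Lemma swap_tparts x y : swap_step x y -> forall w, In w (tparts x) <-> In w (tparts y).
Proof.
  intros [] w. rewrite !tparts_app, !in_app_iff. simpl. rewrite !in_app_iff. tauto.
Qed.

Lemma pe_tparts x y : pe x y -> forall w, In w (tparts x) <-> In w (tparts y).
Proof.
  induction 1; intros w. apply swap_tparts; auto. tauto. rewrite IHclos_refl_trans1; auto.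
Qed.

Lemma pe_length x y : pe x y -> length x = length y.
Proof.
  induction 1; auto. destruct H. rewrite !length_app; simpl; lia. congruence.
Qed.

Lemma tproj_app A B r : tproj (A ++ B) r = tproj A r ++ tproj B r.
Proof.
  induction A as [|[[a b] l] A IH]; simpl; auto.
  destruct (r =? a), (r =? b); simpl; rewrite IH; auto.
Qed.

Lemma tproj_hist W r : tproj W r = tproj (hist r W) r.
Proof.
  induction W as [|[[a b] l] W IH]; simpl; auto.
  destruct (r =? a) eqn:E1, (r =? b) eqn:E2; simpl; rewrite ?E1, ?E2; simpl; rewrite ?IH; auto.
Qed.

Lemma pe_tproj x y r : pe x y -> tproj x r = tproj y r.
Proof. intros H. rewrite (tproj_hist x), (tproj_hist y). rewrite (pe_hist r x y H). auto. Qed.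


Notation cp := causal_prefix.

Fixpoint cpK (s g : list comm) : list comm :=
  match s with
  | [] => []
  | a :: s' => let k := cpK s' g in if shares a (k ++ g) then a :: k else k
  end.

Lemma cp_eq s g : cp s g = cpK s g ++ g.
Proof.
  induction s as [|a s IH]; simpl; auto. rewrite IH. destruct (shares a (cpK s g ++ g)); auto.
Qed.

Lemma cp_app A B g : cp (A ++ B) g = cp A (cp B g).
Proof. induction A as [|a A IH]; simpl; auto. rewrite IH. auto. Qed.

Lemma cpK_ext s g1 g2 : (forall x, In x (tparts g1) <-> In x (tparts g2)) -> cpK s g1 = cpK s g2.
Proof.
  intros H. induction s as [|a s IH]; simpl; auto. rewrite IH.
  rewrite (shares_ext a (cpK s g2 ++ g1) (cpK s g2 ++ g2)); auto.
  intros x. rewrite !tparts_app, !in_app_iff. rewrite H. tauto.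
Qed.

Lemma cp_pe_arg s g1 g2 : pe g1 g2 -> pe (cp s g1) (cp s g2).
Proof.
  intros H. rewrite !cp_eq. rewrite (cpK_ext s g1 g2). apply pe_app_l; auto.
  apply pe_tparts; auto.
Qed.

Lemma shares_cons_disj a b K : disjoint (cparts a) (cparts b) -> shares a (b :: K) = shares a K.
Proof.
  intros H. apply eq_true_iff_eq. rewrite !shares_iff. split; intros [x [H1 H2]]; exists x; split; auto.
  - simpl in H2. unfold tparts in H2. simpl in H2. apply in_app_iff in H2. destruct H2; auto.
    exfalso; eapply H; eauto.
  - unfold tparts; simpl. apply in_app_iff; right; auto.
Qed.

Lemma cp_swap a b m g : disjoint (cparts a) (cparts b) ->
  pe (cp (a :: b :: m) g) (cp (b :: a :: m) g).
Proof.
  intros H. simpl. set (K := cp m g).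
  pose proof (shares_cons_disj a b K H) as E1.
  pose proof (shares_cons_disj b a K (disjoint_sym _ _ H)) as E2.
  destruct (shares b K) eqn:Eb; destruct (shares a K) eqn:Ea; rewrite ?E1, ?E2, ?Ea, ?Eb.
  - apply rt_step. apply (sw [] a b K); auto.
  - apply rt_refl.
  - apply rt_refl.
  - apply rt_refl.
Qed.

Fixpoint ptd (W : list comm) : Prop :=
  match W with
  | [] => True
  | x :: W' => match W' with [] => True | _ => shares x W' = true /\ ptd W' end
  end.

Lemma cp_nonnil s c : cp s [c] <> [].
Proof. rewrite cp_eq. intros H. apply app_eq_nil in H. destruct H; discriminate. Qed.

Lemma cp_ptd s c : ptd (cp s [c]).
Proof.
  induction s as [|a s IH]; simpl; auto.
  destruct (shares a (cp s [c])) eqn:E; auto.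
  destruct (cp s [c]) eqn:E2. exfalso; eapply cp_nonnil; eauto. split; auto.
Qed.

Lemma ptd_suffix s t : ptd (s ++ t) -> ptd t.
Proof.
  induction s as [|x s IH]; simpl; auto. intros H. apply IH.
  destruct (s ++ t) eqn:E; auto. simpl; auto. destruct H; auto.
Qed.

Lemma shares_tparts_eq a L1 L2 : (forall x, In x (tparts L1) <-> In x (tparts L2)) ->
  shares a L1 = true -> shares a L2 = true.
Proof. intros H. rewrite (shares_ext a L1 L2 H). auto. Qed.

Lemma ptd_cons x W : ptd (x :: W) <-> (W = [] \/ (shares x W = true /\ ptd W)).
Proof.
  simpl. destruct W; split; auto. intros [H|H]; [discriminate|auto].
Qed.

Lemma ptd_swap_aux s a b s' : disjoint (cparts a) (cparts b) -> s' <> [] ->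
  ptd (s ++ a :: b :: s') -> ptd (s ++ b :: a :: s').
Proof.
  intros Hd Hs'. induction s as [|x s IH]; intros Hp.
  - simpl in Hp |- *. destruct Hp as [H1 H2].
    rewrite shares_cons_disj in H1 by auto.
    destruct s' as [|y s'']; [congruence|]. destruct H2 as [H2 H3].
    split. rewrite shares_cons_disj by (apply disjoint_sym; auto). auto.
    split; auto.
  - simpl app in *. rewrite ptd_cons in Hp |- *. destruct Hp as [Hp|[H1 H2]].
    + destruct s; discriminate.
    + right. split; auto.
      eapply shares_tparts_eq; [|exact H1]. apply swap_tparts. constructor; auto.
Qed.

Lemma last_app_cons (l1 : list comm) x l2 d : last (l1 ++ x :: l2) d = last (x :: l2) d.
Proof.
  induction l1 as [|y l1 IH]; simpl; auto. rewrite IH. destruct l1; simpl; auto.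
Qed.

Lemma ptd_swap W W' : swap_step W W' -> ptd W -> ptd W' /\ forall d, last W d = last W' d.
Proof.
  intros [s a b s' Hd]. intros Hp.
  assert (Hs' : s' <> []).
  { intros ->. apply ptd_suffix in Hp. simpl in Hp. destruct Hp as [Hp _].
    apply shares_iff in Hp. destruct Hp as [x [H1 H2]]. unfold tparts in H2; simpl in H2.
    rewrite app_nil_r in H2. eapply Hd; eauto. }
  split. apply ptd_swap_aux; auto.
  intros d. destruct s' as [|y s'']; [congruence|].
  rewrite !last_app_cons. reflexivity.
Qed.

Lemma pe_ptd W W' : pe W W' -> ptd W -> ptd W' /\ forall d, last W d = last W' d.
Proof.
  induction 1; intros Hp.
  - apply ptd_swap; auto.
  - auto.
  - destruct (IHclos_refl_trans1 Hp) as [H1 H2]. destruct (IHclos_refl_trans2 H1) as [H3 H4].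
    split; auto. intros d; rewrite H2; auto.
Qed.

Lemma cp_ptd_full V c : ptd (V ++ [c]) -> cp V [c] = V ++ [c].
Proof.
  induction V as [|a V IH]; intros Hp; [reflexivity|].
  change (ptd (a :: (V ++ [c]))) in Hp.
  rewrite ptd_cons in Hp. destruct Hp as [Hp|[H1 H2]].
  - destruct V; discriminate.
  - simpl. rewrite IH by auto. rewrite H1. auto.
Qed.

Lemma split4 (V R s s' : list comm) c a b : V ++ c :: R = s ++ a :: b :: s' ->
  (exists m, s = V ++ c :: m /\ R = m ++ a :: b :: s') \/
  (V = s /\ c = a /\ R = b :: s') \/
  (V = s ++ [a] /\ c = b /\ R = s') \/
  (exists m, V = s ++ a :: b :: m /\ s' = m ++ c :: R).
Proof.
  intros H. apply app_eq_app in H. destruct H as [l [[H1 H2]|[H1 H2]]].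
  - destruct l as [|x [|y l']].
    + simpl in H2. injection H2; intros; subst. right; left. rewrite app_nil_r. auto.
    + simpl in H2. injection H2; intros; subst. right; right; left. auto.
    + simpl in H2. injection H2; intros; subst. right; right; right. exists l'. auto.
  - destruct l as [|x l'].
    + simpl in H2. injection H2; intros; subst. right; left. rewrite app_nil_r. auto.
    + simpl in H2. injection H2; intros; subst. left. exists l'. auto.
Qed.

Lemma shares_single_disj a c : disjoint (cparts a) (cparts c) -> shares a [c] = false.
Proof.
  intros H. destruct (shares a [c]) eqn:E; auto. exfalso.
  apply shares_iff in E. destruct E as [x [H1 H2]]. unfold tparts in H2; simpl in H2.
  rewrite app_nil_r in H2. eapply H; eauto.
Qed.

Lemma DC W W' : pe W W' -> forall V c R, W = V ++ c :: R ->
  exists V' R', W' = V' ++ c :: R' /\ pe (cp V [c]) (cp V' [c]).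
Proof.
  induction 1; intros V c R HW.
  - destruct H as [s a b s' Hd]. symmetry in HW. apply split4 in HW.
    destruct HW as [[m [H1 H2]]|[[H1 [H2 H3]]|[[H1 [H2 H3]]|[m [H1 H2]]]]]; subst.
    + exists V, (m ++ b :: a :: s'). rewrite <- app_assoc. split; auto. apply rt_refl.
    + exists (s ++ [b]), s'. rewrite <- app_assoc. split; auto.
      rewrite cp_app. simpl. rewrite shares_single_disj by (apply disjoint_sym; auto). apply rt_refl.
    + exists s, (a :: s'). split; auto.
      rewrite cp_app. simpl. rewrite shares_single_disj by auto. apply rt_refl.
    + exists (s ++ b :: a :: m), R. rewrite <- !app_assoc. simpl. split; auto.
      rewrite !cp_app. apply cp_pe_arg. apply cp_swap; auto.
  - exists V, R. split; auto. apply rt_refl.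
  - destruct (IHclos_refl_trans1 V c R HW) as [V1 [R1 [H1 H2]]].
    destruct (IHclos_refl_trans2 V1 c R1 H1) as [V2 [R2 [H3 H4]]].
    exists V2, R2. split; auto. eapply rt_trans; eauto.
Qed.

Lemma cp_occ L g V c R : cp L g = V ++ c :: R -> length R >= length g ->
  exists L1 L2, L = L1 ++ c :: L2 /\ shares c (cp L2 g) = true /\
    V = cpK L1 (c :: cp L2 g) /\ R = cp L2 g.
Proof.
  revert V. induction L as [|x L IH]; intros V H Hl.
  - simpl in H. subst g. rewrite length_app in Hl. simpl in Hl. lia.
  - simpl in H. destruct (shares x (cp L g)) eqn:Ek.
    + destruct V as [|y V].
      * simpl in H. injection H; intros; subst. exists [], L. auto.
      * simpl in H. injection H; intros H' ->.
        destruct (IH V H' Hl) as [L1 [L2 [E1 [E2 [E3 E4]]]]].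
        exists (y :: L1), L2. subst. split; auto. split; auto. split; auto.
        simpl. rewrite <- cp_eq. assert (cp L1 (c :: cp L2 g) = cp (L1 ++ c :: L2) g) as ->.
        { rewrite cp_app. simpl. rewrite E2. auto. }
        rewrite Ek. auto.
    + destruct (IH V H Hl) as [L1 [L2 [E1 [E2 [E3 E4]]]]].
      exists (x :: L1), L2. subst. split; auto. split; auto. split; auto.
      simpl. rewrite <- cp_eq. assert (cp L1 (c :: cp L2 g) = cp (L1 ++ c :: L2) g) as ->.
      { rewrite cp_app. simpl. rewrite E2. auto. }
      rewrite Ek. auto.
Qed.

Lemma cpK_mono L g K : forall x, In x (tparts (cpK L g)) -> In x (tparts (cpK L (g ++ K))).
Proof.
  induction L as [|a L IH]; simpl; auto.
  destruct (shares a (cpK L g ++ g)) eqn:E1.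
  - assert (E2 : shares a (cpK L (g ++ K) ++ g ++ K) = true).
    { apply shares_iff in E1. destruct E1 as [y [Hy1 Hy2]]. apply shares_iff. exists y. split; auto.
      rewrite !tparts_app, !in_app_iff in *. destruct Hy2; auto. }
    rewrite E2. intros x. unfold tparts; simpl. rewrite !in_app_iff. intros [H|H]; auto.
  - intros x H. destruct (shares a (cpK L (g ++ K) ++ g ++ K)); auto.
    unfold tparts; simpl. rewrite in_app_iff. right. apply IH; auto.
Qed.

Lemma cpK_idem L g K : cpK (cpK L (g ++ K)) g = cpK L g.
Proof.
  induction L as [|a L IH]; simpl; auto.
  destruct (shares a (cpK L (g ++ K) ++ g ++ K)) eqn:E1.
  - simpl. rewrite IH. auto.
  - rewrite IH. destruct (shares a (cpK L g ++ g)) eqn:E2; auto.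
    exfalso. apply shares_iff in E2. destruct E2 as [y [Hy1 Hy2]].
    assert (shares a (cpK L (g ++ K) ++ g ++ K) = true).
    { apply shares_iff. exists y. split; auto. rewrite !tparts_app, !in_app_iff in *.
      destruct Hy2; auto. left; apply cpK_mono; auto. }
    congruence.
Qed.

Lemma hist_cpK z L g : In z (tparts g) -> hist z (cpK L g) = hist z L.
Proof.
  intros Hz. induction L as [|a L IH]; simpl; auto.
  destruct (involves z a) eqn:Ea.
  - assert (shares a (cpK L g ++ g) = true).
    { apply shares_iff. exists z. split. apply in_cparts; auto. rewrite tparts_app, in_app_iff; auto. }
    rewrite H. simpl. rewrite Ea, IH. auto.
  - destruct (shares a (cpK L g ++ g)); simpl; rewrite ?Ea; auto.
Qed.

Lemma tproj_cpK r L g : In r (tparts g) -> tproj (cpK L g) r = tproj L r.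
Proof.
  intros H. rewrite (tproj_hist (cpK L g)), (tproj_hist L). rewrite hist_cpK; auto.
Qed.

Lemma cpK_parts L c1 c2 : cparts c1 = cparts c2 -> cpK L [c1] = cpK L [c2].
Proof. intros H. apply cpK_ext. intros x. unfold tparts; simpl. rewrite H. tauto. Qed.

Definition upd (T : participant -> bool) (c : comm) : participant -> bool :=
  match c with (a, b, _) => if T a || T b then fun z => T z || (z =? a) || (z =? b) else T end.
Fixpoint taint (T : participant -> bool) (W : list comm) : participant -> bool :=
  match W with [] => T | c :: W' => taint (upd T c) W' end.

Lemma taint_app T A B : taint T (A ++ B) = taint (taint T A) B.
Proof. revert T. induction A; simpl; auto. Qed.

Lemma upd_mono T c z : T z = true -> upd T c z = true.
Proof. destruct c as [[a b] l]; simpl. intros H. destruct (T a || T b); rewrite ?H; auto. Qed.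

Lemma taint_mono T W z : T z = true -> taint T W z = true.
Proof. revert T. induction W; simpl; auto. intros T H. apply IHW, upd_mono; auto. Qed.

Lemma upd_noz T c z : involves z c = false -> upd T c z = T z.
Proof.
  destruct c as [[a b] l]; simpl. intros H. apply orb_false_iff in H. destruct H as [H1 H2].
  destruct (T a || T b); auto. rewrite H1, H2. rewrite !orb_false_r. auto.
Qed.

Lemma upd_in T a b l z : involves z (a, b, l) = true -> upd T (a, b, l) z = T a || T b.
Proof.
  simpl. intros H. destruct (T a || T b) eqn:E.
  - destruct (T z), (z =? a), (z =? b); simpl in *; auto.
  - apply orb_false_iff in E. destruct E. apply orb_true_iff in H.
    destruct H as [H|H]; apply Nat.eqb_eq in H; subst; auto.
Qed.

Lemma taint_noz T D z : hist z D = [] -> taint T D z = T z.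
Proof.
  revert T. induction D as [|c D IH]; simpl; auto. intros T H.
  destruct (involves z c) eqn:E; [discriminate|]. rewrite IH; auto. apply upd_noz; auto.
Qed.

Definition touches (T : participant -> bool) (L : list comm) := exists x, In x (tparts L) /\ T x = true.

Lemma touches_cons T c L : touches T (c :: L) <-> touches T [c] \/ touches T L.
Proof.
  unfold touches, tparts. simpl. split.
  - intros [x [H1 H2]]. apply in_app_iff in H1. destruct H1; [left|right]; exists x; auto.
    rewrite app_nil_r; auto.
  - intros [[x [H1 H2]]|[x [H1 H2]]]; exists x; rewrite in_app_iff; auto.
    rewrite app_nil_r in H1; auto.
Qed.

Lemma touches_upd T c L : touches (upd T c) L <->
  touches T L \/ (touches T [c] /\ shares c L = true).
Proof.
  destruct c as [[a b] l]. unfold touches. simpl.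
  destruct (T a || T b) eqn:E.
  - split.
    + intros [x [H1 H2]]. apply orb_true_iff in H2. destruct H2 as [H2|H2].
      apply orb_true_iff in H2. destruct H2 as [H2|H2].
      * left. exists x; auto.
      * right. split. apply orb_true_iff in E. destruct E; [exists a|exists b]; simpl; auto.
        apply shares_iff. exists x. apply Nat.eqb_eq in H2. subst. simpl; auto.
      * right. split. apply orb_true_iff in E. destruct E; [exists a|exists b]; simpl; auto.
        apply shares_iff. exists x. apply Nat.eqb_eq in H2. subst. simpl; auto.
    + intros [[x [H1 H2]]|[_ H]].
      * exists x. rewrite H2; auto.
      * apply shares_iff in H. destruct H as [x [H1 H2]]. exists x. split; auto.
        simpl in H1. destruct H1 as [<-|[<-|[]]]; rewrite Nat.eqb_refl, ?orb_true_r; auto.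
  - split; auto. intros [H|[[x [H1 H2]] _]]; auto. exfalso.
    apply orb_false_iff in E. simpl in H1. destruct H1 as [<-|[<-|[]]]; destruct E; congruence.
Qed.

Lemma taint_cp rho : forall T g, touches T (cp rho g) <-> touches (taint T rho) g.
Proof.
  induction rho as [|c rho IH]; intros T g; simpl. tauto.
  rewrite <- IH. rewrite touches_upd.
  destruct (shares c (cp rho g)) eqn:E.
  - rewrite touches_cons. tauto.
  - split; [tauto|]. intros [H|[_ H]]; auto. discriminate.
Qed.


Inductive reach : gtype -> list comm -> gtype -> Prop :=
| r_nil H : reach H [] H
| r_cons p q bs l G' W H : In (l, G') bs -> reach G' W H -> reach (GMsg p q bs) ((p, q, l) :: W) H.

Lemma reach_app H A B H' : reach H (A ++ B) H' <-> exists Hm, reach H A Hm /\ reach Hm B H'.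
Proof.
  revert H. induction A as [|c A IH]; intros H; simpl.
  - split. intros; exists H; split; auto; constructor. intros [Hm [H1 H2]]. inversion H1; subst; auto.
  - split.
    + intros Hr. inversion Hr as [|p q bs l G' W0 H0 Hin Hr']; subst. apply IH in Hr'.
      destruct Hr' as [Hm [H1 H2]].
      exists Hm. split; auto. econstructor; eauto.
    + intros [Hm [H1 H2]]. inversion H1; subst. econstructor; eauto. apply IH. eauto.
Qed.

Lemma trace_reach H W : trace_of H W -> exists H', reach H W H'.
Proof.
  induction 1.
  - exists G'. econstructor; eauto. constructor.
  - destruct IHtrace_of as [H' HH]. exists H'. econstructor; eauto.
Qed.

Lemma reach_trace H W H' : reach H W H' -> W <> [] -> trace_of H W.
Proof.
  induction 1; intros Hne. congruence.
  destruct W as [|c W]. eapply tr_one; eauto. eapply tr_cons; eauto. apply IHreach. discriminate.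
Qed.

Lemma subtree_trans A B C : subtree A B -> subtree B C -> subtree A C.
Proof. induction 1; intros; auto. econstructor; eauto. Qed.

Lemma reach_subtree H W H' : reach H W H' -> subtree H H'.
Proof. induction 1. constructor. econstructor; eauto. Qed.

Lemma gwf_sub G H : gwf G -> subtree G H -> gwf H.
Proof. unfold gwf. intros HG Hs H' p q bs Hs' E. eapply (HG H'); eauto. eapply subtree_trans; eauto. Qed.

Lemma gwf_node p q bs : gwf (GMsg p q bs) -> bs <> [] /\ NoDup (map fst bs).
Proof. intros H. eapply H; eauto. constructor. Qed.

Lemma gwf_child p q bs l G' : gwf (GMsg p q bs) -> In (l, G') bs -> gwf G'.
Proof. intros H Hin. eapply gwf_sub; eauto. econstructor; eauto. constructor. Qed.

Lemma in_part_node z p q bs : bs <> [] -> (z = p \/ z = q) -> in_part z (GMsg p q bs).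
Proof.
  intros Hb Hz. destruct bs as [|[l G'] bs]; [congruence|].
  exists [(p, q, l)]. split. eapply tr_one; left; eauto. unfold tparts; simpl. destruct Hz; auto.
Qed.

Lemma in_part_child z p q bs l G' : In (l, G') bs -> in_part z G' -> in_part z (GMsg p q bs).
Proof.
  intros Hin [s [H1 H2]]. exists ((p, q, l) :: s). split. eapply tr_cons; eauto.
  unfold tparts in *. simpl. auto.
Qed.

Definition F2 z (bs : list (label * gtype)) (Ps : list (label * process)) :=
  Forall2 (fun b c => fst b = fst c /\ proj (snd b) z (snd c)) bs Ps.

Lemma proj_shape z p q bs Q : gwf (GMsg p q bs) -> proj (GMsg p q bs) z Q -> (z = p \/ z = q) ->
  (z = q /\ exists Ps, Q = PRecv p Ps /\ F2 z bs Ps) \/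
  (z = p /\ z <> q /\ exists Ps, Q = PSend q Ps /\ F2 z bs Ps).
Proof.
  intros Hw Hp Hz. destruct (gwf_node _ _ _ Hw) as [Hne Hnd].
  inversion Hp; subst.
  - exfalso. apply H. apply in_part_node; auto.
  - left. split; auto. exists Ps. split; auto.
  - right. split; auto. split; auto. exists Ps; split; auto.
  - exfalso. destruct Hz; auto.
Qed.

Fixpoint lookup (l : label) (Ps : list (label * process)) : option process :=
  match Ps with [] => None | (l', P) :: Ps' => if l =? l' then Some P else lookup l Ps' end.

Definition pnext (Q : process) (c : comm) : process :=
  match Q with
  | PSend _ Ps | PRecv _ Ps =>
    match c with (_, _, l) => match lookup l Ps with Some P => P | None => PEnd end end
  | PEnd => PEnd
  end.

Fixpoint pstate (Q : process) (W : list comm) : process :=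
  match W with [] => Q | c :: W' => pstate (pnext Q c) W' end.

Lemma pstate_app Q A B : pstate Q (A ++ B) = pstate (pstate Q A) B.
Proof. revert Q; induction A; simpl; auto. Qed.

Lemma F2_lookup z bs Ps l G' : F2 z bs Ps -> NoDup (map fst bs) -> In (l, G') bs ->
  exists P, lookup l Ps = Some P /\ proj G' z P.
Proof.
  induction 1 as [|[l0 G0] [l1 P0] bs Ps [Hf Hpr] HF IH]; simpl in *; intros Hnd Hin. contradiction.
  subst l1. inversion Hnd; subst.
  destruct Hin as [Heq|Hin].
  - injection Heq; intros; subst. exists P0. rewrite Nat.eqb_refl. auto.
  - destruct (l =? l0) eqn:E.
    + apply Nat.eqb_eq in E; subst. exfalso. apply H1. apply in_map_iff. exists (l0, G'); auto.
    + apply IH; auto.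
Qed.

Lemma F2_labels z bs Ps : F2 z bs Ps -> map fst bs = map fst Ps.
Proof. induction 1 as [|x y bs Ps [H1 _] _ IH]; simpl; auto. congruence. Qed.

Lemma proj_step z p q bs l G' Q : gwf (GMsg p q bs) -> proj (GMsg p q bs) z Q -> In (l, G') bs ->
  proj G' z (if involves z (p, q, l) then pnext Q (p, q, l) else Q).
Proof.
  intros Hw Hp Hin. destruct (gwf_node _ _ _ Hw) as [Hne Hnd].
  destruct (involves z (p, q, l)) eqn:Ei.
  - assert (Hz : z = p \/ z = q).
    { simpl in Ei. apply orb_true_iff in Ei. rewrite !Nat.eqb_eq in Ei. tauto. }
    destruct (proj_shape _ _ _ _ _ Hw Hp Hz) as [[_ [Ps [-> HF]]]|[_ [_ [Ps [-> HF]]]]];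
    destruct (F2_lookup _ _ _ _ _ HF Hnd Hin) as [P [E1 E2]]; simpl; rewrite E1; auto.
  - assert (Hz : z <> p /\ z <> q).
    { simpl in Ei. apply orb_false_iff in Ei. destruct Ei as [E1 E2].
      apply Nat.eqb_neq in E1, E2. auto. }
    inversion Hp; subst.
    + apply proj_out. intros Hip. match goal with Hn : ~ in_part _ _ |- _ => apply Hn end.
      eapply in_part_child; eauto.
    + tauto.
    + tauto.
    + match goal with HF : Forall _ _ |- _ => rewrite Forall_forall in HF; apply (HF (l, G')); auto end.
Qed.

Lemma proj_walk H W H' z Q : reach H W H' -> gwf H -> proj H z Q -> proj H' z (pstate Q (hist z W)).
Proof.
  intros Hr. revert Q. induction Hr; intros Q Hw Hp; simpl; auto.
  pose proof (proj_step z p q bs l G' Q Hw Hp H0) as Hs.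
  apply IHHr in Hs; [|eapply gwf_child; eauto].
  unfold hist; simpl. unfold involves in *. destruct ((z =? p) || (z =? q)); simpl; auto.
Qed.

Lemma proj_match z a b bs a' b' bs' Q :
  gwf (GMsg a b bs) -> gwf (GMsg a' b' bs') ->
  proj (GMsg a b bs) z Q -> proj (GMsg a' b' bs') z Q ->
  (z = a \/ z = b) -> (z = a' \/ z = b') ->
  a = a' /\ b = b' /\ map fst bs = map fst bs'.
Proof.
  intros W1 W2 P1 P2 Z1 Z2.
  destruct (proj_shape _ _ _ _ _ W1 P1 Z1) as [[E1 [Ps [-> HF]]]|[E1 [N1 [Ps [-> HF]]]]];
  destruct (proj_shape _ _ _ _ _ W2 P2 Z2) as [[E2 [Ps' [E HF']]]|[E2 [N2 [Ps' [E HF']]]]];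
  try discriminate; injection E; intros; subst;
  rewrite (F2_labels _ _ _ HF), (F2_labels _ _ _ HF'); auto.
Qed.

Lemma proj_in_part z H P : proj H z P -> P <> PEnd -> in_part z H.
Proof. intros Hp Hne. inversion Hp; subst; auto. congruence. Qed.


Lemma filter_split {A} (f : A -> bool) L : forall P x R, filter f L = P ++ x :: R ->
  exists L1 L2, L = L1 ++ x :: L2 /\ filter f L1 = P /\ f x = true /\ filter f L2 = R.
Proof.
  induction L as [|y L IH]; intros P x R H; simpl in H.
  - destruct P; discriminate.
  - destruct (f y) eqn:Ey.
    + destruct P as [|p P].
      * injection H; intros; subst. exists [], L. simpl. auto.
      * injection H; intros H' ->. destruct (IH P x R H') as [L1 [L2 [E1 [E2 [E3 E4]]]]].
        exists (p :: L1), L2. subst. simpl. rewrite Ey. auto.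
    + destruct (IH P x R H) as [L1 [L2 [E1 [E2 [E3 E4]]]]].
      exists (y :: L1), L2. subst. simpl. rewrite Ey. auto.
Qed.

Lemma split_unique {A} (f : A -> bool) P1 x R1 : forall P2 y R2,
  P1 ++ x :: R1 = P2 ++ y :: R2 -> f x = true -> f y = true ->
  length (filter f P1) = length (filter f P2) -> P1 = P2 /\ x = y /\ R1 = R2.
Proof.
  induction P1 as [|a P1 IH]; intros P2 y R2 H Fx Fy Hl.
  - destruct P2 as [|b P2].
    + simpl in H. injection H; intros; subst; auto.
    + simpl in H. injection H; intros; subst. simpl in Hl. rewrite Fx in Hl. simpl in Hl. discriminate.
  - destruct P2 as [|b P2].
    + simpl in H. injection H; intros; subst. simpl in Hl. rewrite Fy in Hl. simpl in Hl. discriminate.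
    + simpl in H. injection H; intros H' ->. simpl in Hl.
      destruct (f b); simpl in Hl; [injection Hl; intros Hl'|rename Hl into Hl'];
      destruct (IH P2 y R2 H' Fx Fy Hl') as [E1 [E2 E3]]; subst; auto.
Qed.

Lemma filter_filter_sub {A} (f g : A -> bool) W : (forall c, f c = true -> g c = true) ->
  filter f (filter g W) = filter f W.
Proof.
  intros H. induction W as [|c W IH]; simpl; auto.
  destruct (g c) eqn:Eg; simpl; destruct (f c) eqn:Ef; rewrite ?IH; auto.
  apply H in Ef. congruence.
Qed.

Definition pairf (s u : participant) (c : comm) : bool :=
  match c with (a, b, _) => (a =? s) && (b =? u) end.

Lemma pairf_hist s u y W : (y = s \/ y = u) -> filter (pairf s u) (hist y W) = filter (pairf s u) W.
Proof.
  intros Hy. unfold hist. apply filter_filter_sub. intros [[a b] l]. simpl.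
  rewrite andb_true_iff, !Nat.eqb_eq, orb_true_iff, !Nat.eqb_eq. intros [-> ->]. tauto.
Qed.

Lemma taint_prefix_eq T L W1 M1 W2 M2 w : L = W1 ++ M1 -> L = W2 ++ M2 ->
  length (hist w W1) = length (hist w W2) -> taint T W1 w = taint T W2 w.
Proof.
  intros E1 E2 Hl. rewrite E1 in E2. apply app_eq_app in E2. destruct E2 as [l [[H1 _]|[H1 _]]]; subst.
  - unfold hist in Hl. rewrite filter_app, length_app in Hl.
    assert (hist w l = []) by (apply length_zero_iff_nil; unfold hist; lia).
    rewrite taint_app. rewrite (taint_noz (taint T W2) l w H). auto.
  - unfold hist in Hl. rewrite filter_app, length_app in Hl.
    assert (hist w l = []) by (apply length_zero_iff_nil; unfold hist; lia).
    rewrite taint_app. rewrite (taint_noz (taint T W1) l w H). auto.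
Qed.

Fixpoint sumf (f : participant -> nat) (L : list participant) : nat :=
  match L with [] => 0 | z :: L' => f z + sumf f L' end.

Lemma sumf_le f g L : (forall z, f z <= g z) -> sumf f L <= sumf g L.
Proof. intros H. induction L; simpl; auto. specialize (H a). lia. Qed.

Lemma sumf_lt f g L z : (forall z, f z <= g z) -> In z L -> f z < g z -> sumf f L < sumf g L.
Proof.
  intros H Hin Hlt. induction L as [|a L IH]; simpl in *. contradiction.
  destruct Hin as [->|Hin]. pose proof (sumf_le f g L H). lia.
  specialize (IH Hin). specialize (H a). lia.
Qed.

Lemma sumf_ge f L z : In z L -> f z <= sumf f L.
Proof. induction L; simpl; intros []; subst; auto; try lia. specialize (IHL H). lia. Qed.

Lemma hist_app z A B : hist z (A ++ B) = hist z A ++ hist z B.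
Proof. apply filter_app. Qed.

Lemma hist_single z c : hist z [c] = if involves z c then [c] else [].
Proof. unfold hist; simpl. destruct (involves z c); auto. Qed.

Lemma in_hist_tparts z W c : In c (hist z W) -> In z (tparts W).
Proof.
  intros H. unfold hist in H. apply filter_In in H. apply in_tparts. exists c. tauto.
Qed.


Section Realize.
Variables (H1 H2 : gtype) (X : participant -> bool) (tau1 : list comm) (r : participant).
Hypothesis HW1 : gwf H1.
Hypothesis HW2 : gwf H2.
Hypothesis Hproj : forall z, X z = false -> exists Z, proj H1 z Z /\ proj H2 z Z.
Hypothesis Hreach1 : exists He, reach H1 tau1 He.
Hypothesis HrX : X r = false.
Hypothesis Htaint : taint X tau1 r = true.

Definition Hz z := hist z tau1.
Definition TS1 z k := exists W W', tau1 = W ++ W' /\ length (hist z W) = k /\ taint X W z = true.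
Definition Inv t2 := forall z, X z = false ->
  (exists rest, Hz z = hist z t2 ++ rest /\ (TS1 z (length (hist z t2)) -> taint X t2 z = true)) \/
  (exists ext, hist z t2 = Hz z ++ ext /\ (TS1 z (length (Hz z)) -> taint X t2 z = true)).
Definition pending z t2 := exists c rest, Hz z = hist z t2 ++ c :: rest.
Definition mu t2 := sumf (fun z => length (Hz z) - length (hist z t2)) (tparts tau1).

Lemma next_info z t2 Hc d rest : X z = false -> reach H2 t2 Hc ->
  Hz z = hist z t2 ++ d :: rest ->
  exists A B a b bsA l GA Q, tau1 = A ++ d :: B /\ hist z A = hist z t2 /\
    d = (a, b, l) /\ (z = a \/ z = b) /\ In (l, GA) bsA /\
    reach H1 A (GMsg a b bsA) /\ gwf (GMsg a b bsA) /\
    proj (GMsg a b bsA) z Q /\ proj Hc z Q.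
Proof.
  intros Hx Hr Hd. destruct (filter_split _ _ _ _ _ Hd) as [A [B [E1 [E2 [E3 E4]]]]].
  destruct Hreach1 as [He Hre]. rewrite E1 in Hre. apply reach_app in Hre.
  destruct Hre as [HA [HrA HrB]].
  inversion HrB as [|a b bsA l GA W0 H0 Hin Hr']; subst.
  destruct (Hproj z Hx) as [Z [PZ1 PZ2]].
  exists A, B, a, b, bsA, l, GA, (pstate Z (hist z A)).
  assert (Hg : gwf (GMsg a b bsA)) by (eapply gwf_sub; [exact HW1|eapply reach_subtree; eauto]).
  refine (conj E1 (conj E2 (conj eq_refl (conj _ (conj Hin (conj HrA (conj Hg (conj _ _)))))))).
  - simpl in E3. apply orb_true_iff in E3. rewrite !Nat.eqb_eq in E3. auto.
  - eapply proj_walk; eauto.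
  - change (hist z A) with (filter (involves z) A). rewrite E2. eapply proj_walk; eauto.
Qed.

Lemma reach_gwf2 t2 Hc : reach H2 t2 Hc -> gwf Hc.
Proof. intros H. eapply gwf_sub; [exact HW2|eapply reach_subtree; eauto]. Qed.

Lemma pending_in_part z t2 Hc : X z = false -> reach H2 t2 Hc -> pending z t2 -> in_part z Hc.
Proof.
  intros Hx Hr [d [rest Hd]].
  destruct (next_info z t2 Hc d rest Hx Hr Hd) as (A & B & a & b & bsA & l & GA & Q & E1 & E2 & E3 & E4 & E5 & E6 & E7 & E8 & E9).
  eapply proj_in_part; eauto.
  destruct (proj_shape _ _ _ _ _ E7 E8 E4) as [[_ [Ps [-> _]]]|[_ [_ [Ps [-> _]]]]]; discriminate.
Qed.

Lemma taint_step T t2 d w : taint T (t2 ++ [d]) w = upd (taint T t2) d w.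
Proof. rewrite taint_app. reflexivity. Qed.

Lemma matched_move t2 s u bs z0 :
  reach H2 t2 (GMsg s u bs) -> Inv t2 -> (z0 = s \/ z0 = u) -> X z0 = false -> pending z0 t2 ->
  exists l G', In (l, G') bs /\ Inv (t2 ++ [(s, u, l)]) /\ mu (t2 ++ [(s, u, l)]) < mu t2 /\
    (forall y, (y = s \/ y = u) -> X y = false -> exists rest, Hz y = hist y (t2 ++ [(s, u, l)]) ++ rest).
Proof.
  intros Hr HI Hz0 Hx0 [d0 [rest0 Hd0]].
  destruct (next_info z0 t2 _ d0 rest0 Hx0 Hr Hd0) as
    (A & B & a & b & bsA & l & GA & Q & E1 & E2 & E3 & E4 & E5 & E6 & E7 & E8 & E9).
  pose proof (reach_gwf2 _ _ Hr) as Wc.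
  destruct (proj_match _ _ _ _ _ _ _ _ E7 Wc E8 E9 E4 Hz0) as [-> [-> Hlab]].
  assert (Hl : In l (map fst bs)). { rewrite <- Hlab. apply in_map_iff. exists (l, GA); auto. }
  apply in_map_iff in Hl. destruct Hl as [[l' G'] [El Hin]]. simpl in El. subst l'.
  set (d := (s, u, l)) in *. subst d0.
  set (f := pairf s u).
  assert (Fd : f d = true). { unfold f, d; simpl. rewrite !Nat.eqb_refl. auto. }
  assert (HfA : filter f (hist z0 t2) = filter f A).
  { rewrite <- E2. apply pairf_hist; auto. }
  assert (Hend : forall y, (y = s \/ y = u) -> X y = false ->
            exists rest, Hz y = hist y t2 ++ d :: rest /\ hist y A = hist y t2).
  { intros y Hy Hxy.
    assert (Hfy : filter f (hist y t2) = filter f A).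
    { rewrite <- HfA. unfold f. rewrite !pairf_hist; auto. }
    assert (Hcount : length (filter f A) < length (filter f (Hz y))).
    { unfold Hz. unfold f. rewrite pairf_hist by auto. fold f. rewrite E1, filter_app.
      rewrite length_app. change (filter f (d :: B)) with (if f d then d :: filter f B else filter f B).
      rewrite Fd. change (length (d :: filter f B)) with (S (length (filter f B))). lia. }
    destruct (HI y Hxy) as [[rest [Hre _]]|[ext [Hex _]]].
    - destruct rest as [|d' rest'].
      + exfalso. rewrite app_nil_r in Hre. rewrite Hre in Hcount. rewrite Hfy in Hcount. lia.
      + destruct (next_info y t2 _ d' rest' Hxy Hr Hre) as
          (A' & B' & a' & b' & bsA' & l2 & GA' & Q' & F1 & F2' & F3 & F4 & F5 & F6 & F7 & F8 & F9).
        destruct (proj_match _ _ _ _ _ _ _ _ F7 Wc F8 F9 F4 Hy) as [-> [-> _]].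
        assert (Fd' : f d' = true). { rewrite F3. unfold f; simpl. rewrite !Nat.eqb_refl. auto. }
        assert (Hlen : length (filter f A) = length (filter f A')).
        { rewrite <- Hfy. rewrite <- F2'. unfold f. rewrite pairf_hist; auto. }
        rewrite E1 in F1.
        destruct (split_unique f A d B A' d' B' F1 Fd Fd' Hlen) as [<- [<- _]].
        exists rest'. split; auto.
    - exfalso. assert (length (filter f (Hz y)) <= length (filter f (hist y t2))).
      { rewrite Hex, filter_app, length_app. lia. }
      rewrite Hfy in H. lia. }
  exists l, G'. change (s, u, l) with d. split; auto. split; [|split].
  -
    intros w Hxw. destruct (involves w d) eqn:Ewd.
    + assert (Hw : w = s \/ w = u).
      { unfold d in Ewd; simpl in Ewd. apply orb_true_iff in Ewd. rewrite !Nat.eqb_eq in Ewd. auto. }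
      destruct (Hend w Hw Hxw) as [rest [Hre HA]].
      assert (Hh : hist w (t2 ++ [d]) = hist w t2 ++ [d]) by (rewrite hist_app, hist_single, Ewd; auto).
      left. exists rest. rewrite Hh, <- app_assoc. split; auto.
      intros [W [W' [T1 [T2 T3]]]].
      assert (Heq : taint X W w = taint X (A ++ [d]) w).
      { eapply (taint_prefix_eq X tau1 W W' (A ++ [d]) B); eauto.
        rewrite E1, <- app_assoc; auto.
        rewrite T2, !hist_app, hist_single, Ewd, HA, !length_app. auto. }
      rewrite Heq, taint_step in T3. rewrite taint_step.
      unfold d in T3 |- *. rewrite upd_in in T3 |- * by auto.
      assert (Hep : forall y, (y = s \/ y = u) -> taint X A y = true -> taint X t2 y = true).
      { intros y Hy Ht. destruct (X y) eqn:Xy. apply taint_mono; auto.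
        destruct (Hend y Hy Xy) as [resty [Hrey HAy]].
        destruct (HI y Xy) as [[rest1 [Hre1 Ht1]]|[ext [Hex _]]].
        - apply Ht1. exists A, (d :: B). repeat split; auto. rewrite HAy; auto.
        - exfalso. apply (f_equal (@length comm)) in Hex. apply (f_equal (@length comm)) in Hrey.
          rewrite !length_app in Hex, Hrey. simpl in Hrey. lia. }
      apply orb_true_iff in T3. apply orb_true_iff. destruct T3 as [T3|T3]; [left|right]; apply Hep; auto.
    + assert (Hh : hist w (t2 ++ [d]) = hist w t2) by (rewrite hist_app, hist_single, Ewd, app_nil_r; auto).
      rewrite Hh. rewrite taint_step. rewrite (upd_noz _ _ _ Ewd). apply HI; auto.
  -
    unfold mu. apply (sumf_lt _ _ _ z0).
    + intros z. rewrite hist_app, length_app. lia.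
    + apply (in_hist_tparts z0 tau1 d). fold (Hz z0). rewrite Hd0. apply in_or_app. right; left; auto.
    + rewrite hist_app, length_app, hist_single.
      assert (involves z0 d = true). { unfold d; simpl. destruct Hz0; subst; rewrite Nat.eqb_refl, ?orb_true_r; auto. }
      rewrite H. simpl. rewrite Hd0, length_app. simpl. lia.
  - intros y Hy Hxy. destruct (Hend y Hy Hxy) as [rest [Hre _]]. exists rest.
    rewrite hist_app, hist_single.
    assert (involves y d = true). { unfold d; simpl. destruct Hy; subst; rewrite Nat.eqb_refl, ?orb_true_r; auto. }
    rewrite H, <- app_assoc. auto.
Qed.


Lemma free_move t2 (s u : participant) (bs : list (label * gtype)) (l : label) (G' : gtype) :
  Inv t2 -> In (l, G') bs ->
  (forall y, (y = s \/ y = u) -> X y = false -> ~ pending y t2) ->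
  Inv (t2 ++ [(s, u, l)]) /\ mu (t2 ++ [(s, u, l)]) <= mu t2.
Proof.
  intros HI Hin Hfree. set (d := (s, u, l)). split.
  - intros w Hxw. destruct (involves w d) eqn:Ewd.
    + assert (Hw : w = s \/ w = u).
      { unfold d in Ewd; simpl in Ewd. apply orb_true_iff in Ewd. rewrite !Nat.eqb_eq in Ewd. auto. }
      assert (Hh : hist w (t2 ++ [d]) = hist w t2 ++ [d]) by (rewrite hist_app, hist_single, Ewd; auto).
      right. rewrite Hh.
      destruct (HI w Hxw) as [[rest [Hre Ht]]|[ext [Hex Ht]]].
      * destruct rest as [|c rest].
        -- rewrite app_nil_r in Hre. exists [d]. rewrite Hre. split; auto.
           intros HT. rewrite taint_step. apply upd_mono. apply Ht. auto.
        -- exfalso. apply (Hfree w Hw Hxw). exists c, rest. auto.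
      * exists (ext ++ [d]). rewrite Hex, app_assoc. split; auto.
        intros HT. rewrite taint_step. apply upd_mono. auto.
    + assert (Hh : hist w (t2 ++ [d]) = hist w t2) by (rewrite hist_app, hist_single, Ewd, app_nil_r; auto).
      rewrite Hh. rewrite taint_step. rewrite (upd_noz _ _ _ Ewd). apply HI; auto.
  - unfold mu. apply sumf_le. intros z. rewrite hist_app, length_app. lia.
Qed.

Definition RGoal := exists tf Hf, reach H2 tf Hf /\ hist r tf = Hz r /\ taint X tf r = true /\
  exists rho d, tf = rho ++ [d] /\ involves r d = true.

Lemma pending_mu z t2 : pending z t2 -> 0 < mu t2.
Proof.
  intros [c [rest Hd]]. unfold mu.
  assert (Hin : In z (tparts tau1)).
  { apply (in_hist_tparts z tau1 c). fold (Hz z). rewrite Hd. apply in_or_app. right; left; auto. }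
  pose proof (sumf_ge (fun z => length (Hz z) - length (hist z t2)) _ _ Hin). simpl in H.
  rewrite Hd, length_app in H. simpl in H. lia.
Qed.

Lemma hist_other z t2 s u l : involves z (s, u, l) = false -> hist z (t2 ++ [(s, u, l)]) = hist z t2.
Proof. intros E. rewrite hist_app, hist_single, E, app_nil_r. auto. Qed.

Lemma after_matched n t2 Hc s u bs z0
  (IH : forall t2 Hc, mu t2 <= n -> reach H2 t2 Hc -> Inv t2 -> pending r t2 -> RGoal) :
  reach H2 t2 Hc -> Hc = GMsg s u bs -> Inv t2 -> pending r t2 -> mu t2 <= S n ->
  (z0 = s \/ z0 = u) -> X z0 = false -> pending z0 t2 -> RGoal.
Proof.
  intros Hr -> HI Hp Hmu Hz0 Hx0 Hpz.
  destruct (matched_move t2 s u bs z0 Hr HI Hz0 Hx0 Hpz) as [l [G' [Hin [HI' [Hmu' Hend]]]]].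
  assert (Hr' : reach H2 (t2 ++ [(s, u, l)]) G').
  { apply reach_app. exists (GMsg s u bs). split; auto. econstructor; eauto. constructor. }
  destruct (involves r (s, u, l)) eqn:Er.
  - assert (Hrs : r = s \/ r = u).
    { simpl in Er. apply orb_true_iff in Er. rewrite !Nat.eqb_eq in Er. auto. }
    destruct (Hend r Hrs HrX) as [rest Hre].
    destruct rest as [|c rest].
    + rewrite app_nil_r in Hre. exists (t2 ++ [(s, u, l)]), G'. split; auto. split; auto. split.
      * destruct (HI' r HrX) as [[rest1 [_ Ht]]|[ext [_ Ht]]]; apply Ht.
        -- exists tau1, []. rewrite app_nil_r, <- Hre. auto.
        -- exists tau1, []. rewrite app_nil_r. auto.
      * exists t2, (s, u, l). auto.
    + apply (IH (t2 ++ [(s, u, l)]) G'); auto. lia. exists c, rest. auto.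
  - apply (IH (t2 ++ [(s, u, l)]) G'); auto. lia.
    destruct Hp as [c [rest Hd]]. exists c, rest. rewrite hist_other; auto.
Qed.

Lemma inner_loop n
  (IH : forall t2 Hc, mu t2 <= n -> reach H2 t2 Hc -> Inv t2 -> pending r t2 -> RGoal) :
  forall pi t2 Hc Hpi, reach H2 t2 Hc -> reach Hc pi Hpi -> hist r pi = [] ->
  (exists a b bs, Hpi = GMsg a b bs /\ (r = a \/ r = b)) ->
  Inv t2 -> pending r t2 -> mu t2 <= S n -> RGoal.
Proof.
  induction pi as [|c pi IHpi]; intros t2 Hc Hpi Hr Hrp Hh Hnode HI Hp Hmu.
  - inversion Hrp; subst. destruct Hnode as [a [b [bs [-> Hrab]]]].
    eapply after_matched; eauto.
  - inversion Hrp as [|s u bs l G' W0 H0 Hin Hrp']; subst.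
    assert (Er : involves r (s, u, l) = false).
    { unfold hist in Hh; simpl in Hh; unfold involves; destruct ((r =? s) || (r =? u)); [discriminate|auto]. }
    destruct (classic (exists y, (y = s \/ y = u) /\ X y = false /\ pending y t2)) as [[y [Hy [Hxy Hpy]]]|Hno].
    + eapply after_matched; eauto.
    + assert (Hfree : forall y, (y = s \/ y = u) -> X y = false -> ~ pending y t2).
      { intros y Hy Hxy Hpy. apply Hno. exists y; auto. }
      destruct (free_move t2 s u bs l G' HI Hin Hfree) as [HI' Hmu'].
      apply (IHpi (t2 ++ [(s, u, l)]) G' Hpi); auto.
      * apply reach_app. exists (GMsg s u bs). split; auto. econstructor; eauto. constructor.
      * unfold hist in Hh |- *; simpl in Hh. unfold involves in Er. rewrite Er in Hh. exact Hh.
      * destruct Hp as [c0 [rest Hd]]. exists c0, rest. rewrite hist_other; auto.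
      * lia.
Qed.

Lemma outer_loop : forall n t2 Hc, mu t2 <= n -> reach H2 t2 Hc -> Inv t2 -> pending r t2 -> RGoal.
Proof.
  induction n as [|n IHn]; intros t2 Hc Hmu Hr HI Hp.
  - pose proof (pending_mu r t2 Hp). lia.
  - pose proof (pending_in_part r t2 Hc HrX Hr Hp) as [s0 [Htr Hin]].
    apply in_tparts in Hin. destruct Hin as [c [Hc1 Hc2]].
    assert (Hhs : hist r s0 <> []).
    { intros E. assert (In c (hist r s0)) by (apply filter_In; auto). rewrite E in H; auto. }
    destruct (hist r s0) as [|x R] eqn:Ehs; [congruence|].
    destruct (filter_split (involves r) s0 [] x R Ehs) as [pi [L2 [E1 [E2 [E3 E4]]]]].
    destruct (trace_reach _ _ Htr) as [He Hre]. rewrite E1 in Hre. apply reach_app in Hre.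
    destruct Hre as [Hpi [Hr1 Hr2]].
    inversion Hr2 as [|a b bs l G' W0 H0 Hin' Hr3]; subst.
    eapply (inner_loop n IHn pi t2 Hc); eauto.
    exists a, b, bs. split; auto. simpl in E3. apply orb_true_iff in E3. rewrite !Nat.eqb_eq in E3. auto.
Qed.

Lemma realize : RGoal.
Proof.
  assert (Hp : pending r []).
  { destruct (hist r tau1) as [|c rest] eqn:E.
    - exfalso. rewrite taint_noz in Htaint; auto. congruence.
    - exists c, rest. unfold Hz. rewrite E. auto. }
  apply (outer_loop (mu []) [] H2); auto. constructor.
  intros z Hxz. left. exists (Hz z). split; auto. simpl.
  intros [W [W' [E1 [E2 E3]]]]. rewrite taint_noz in E3; auto.
  apply length_zero_iff_nil; auto.
Qed.

End Realize.


Lemma shares_false_cons a x L : shares a (x :: L) = false ->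
  disjoint (cparts a) (cparts x) /\ shares a L = false.
Proof.
  intros H. split.
  - intros y H1 H2. assert (shares a (x :: L) = true); [|congruence].
    apply shares_iff. exists y. split; auto. unfold tparts; simpl. apply in_app_iff; auto.
  - destruct (shares a L) eqn:E; auto. apply shares_iff in E. destruct E as [y [H1 H2]].
    assert (shares a (x :: L) = true); [|congruence].
    apply shares_iff. exists y. split; auto. unfold tparts; simpl. apply in_app_iff; auto.
Qed.

Lemma pe_move a L M : shares a L = false -> pe (a :: L ++ M) (L ++ a :: M).
Proof.
  induction L as [|x L IH]; simpl; intros H. apply rt_refl.
  apply shares_false_cons in H. destruct H as [Hd H].
  eapply rt_trans. apply rt_step. apply (sw [] a x (L ++ M)); auto.
  simpl. apply pe_cons. auto.
Qed.

Lemma cp_split A g K : exists s', pe (cp A (g ++ K)) (cp A g ++ s').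
Proof.
  induction A as [|a A IH]; simpl.
  - exists K. apply rt_refl.
  - destruct IH as [s' Hs].
    destruct (shares a (cp A g)) eqn:E1.
    + assert (E2 : shares a (cp A (g ++ K)) = true).
      { apply shares_iff in E1. destruct E1 as [x [H1 H2]]. apply shares_iff. exists x. split; auto.
        apply (pe_tparts _ _ Hs). rewrite tparts_app, in_app_iff. auto. }
      rewrite E2. exists s'. apply pe_cons. auto.
    + destruct (shares a (cp A (g ++ K))).
      * exists (a :: s'). eapply rt_trans. apply pe_cons. apply Hs. apply pe_move. auto.
      * exists s'. auto.
Qed.

Lemma pe_cancel_last W W' : pe W W' -> ptd W -> forall Y c, W = Y ++ [c] ->
  exists Y', W' = Y' ++ [c] /\ pe Y Y'.
Proof.
  induction 1; intros Hp Y c0 HW.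
  - destruct H as [s a b s' Hd].
    assert (Hs' : s' <> []).
    { intros ->. apply ptd_suffix in Hp. simpl in Hp. destruct Hp as [Hp _].
      apply shares_iff in Hp. destruct Hp as [x [H1 H2]]. unfold tparts in H2; simpl in H2.
      rewrite app_nil_r in H2. eapply Hd; eauto. }
    destruct (exists_last Hs') as [s'' [x ->]].
    replace (s ++ a :: b :: s'' ++ [x]) with ((s ++ a :: b :: s'') ++ [x]) in HW
      by (rewrite <- app_assoc; auto).
    apply app_inj_tail in HW. destruct HW as [HY Hc]. subst Y c0.
    exists (s ++ b :: a :: s''). split. rewrite <- app_assoc. auto.
    apply rt_step. apply sw; auto.
  - exists Y. split; [auto | apply rt_refl].
  - destruct (IHclos_refl_trans1 Hp Y c0 HW) as [Y1 [E1 P1]].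
    destruct (pe_ptd _ _ H Hp) as [Hp' _].
    destruct (IHclos_refl_trans2 Hp' Y1 c0 E1) as [Y2 [E2 P2]].
    exists Y2. split; auto. eapply rt_trans; eauto.
Qed.

Lemma last_cp L c d : last (cp L [c]) d = c.
Proof. rewrite cp_eq. apply last_last. Qed.

Lemma pe_last_ptd W W' : pe W W' -> ptd W -> forall d, last W' d = last W d.
Proof. intros H Hp d. destruct (pe_ptd _ _ H Hp) as [_ H2]. auto. Qed.


Lemma reach_step_inv H c H' : reach H [c] H' ->
  exists a b bs l, H = GMsg a b bs /\ c = (a, b, l) /\ In (l, H') bs.
Proof.
  intros Hr. inversion Hr as [|a b bs l G' W0 H0 Hin Hr']; subst.
  inversion Hr'; subst. exists a, b, bs, l. auto.
Qed.

Theorem mainTheorem3 (G : gtype) :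
  gwf G -> gregular G -> projectable G -> sem_projectable G.
Proof.
  intros Hwf _ Hpr g1 g2 Hev1 Hev2 Hic s1 a1 r Hev1' Hle Hr Hnr.
  destruct Hic as (sg & p & q & l1 & l2 & Hl12 & Hg1 & Hg2).
  apply perm_pe in Hg1. apply perm_pe in Hg2.
  set (c1 := (p, q, l1) : comm) in *. set (c2 := (p, q, l2) : comm) in *.
  destruct Hev1 as (ta & b & Htra & Hga). apply perm_pe in Hga. unfold ev in Hga.
  assert (Pg1 : ptd g1).
  { destruct (pe_ptd _ _ (pe_sym _ _ Hga) (cp_ptd ta b)) as [H _]. auto. }
  assert (Psg : ptd (sg ++ [c1])) by (destruct (pe_ptd _ _ Hg1 Pg1); auto).
  assert (Hcm : cm g1 = c1).
  { unfold cm. rewrite (pe_last_ptd _ _ (pe_sym _ _ Hg1) Psg). apply last_last. }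
  rewrite Hcm in Hnr. unfold c1 in Hnr. simpl in Hnr.
  assert (Hrp : r <> p) by (intros ->; apply Hnr; auto).
  assert (Hrq : r <> q) by (intros ->; apply Hnr; auto).
  destruct Hev1' as (t & a & Htr & Hs1). apply perm_pe in Hs1. unfold ev in Hs1.
  assert (Ea : a = a1).
  { pose proof (pe_last_ptd _ _ (pe_sym _ _ Hs1) (cp_ptd t a) c1) as E.
    rewrite last_cp, last_last in E. auto. }
  subst a.
  destruct Hle as (u & u' & Hu & Hu'). apply perm_pe in Hu. apply perm_pe in Hu'.
  assert (HE : pe (sg ++ c1 :: u') (cp t [a1])).
  { eapply rt_trans; [|exact Hs1].
    eapply rt_trans; [|apply (pe_sym _ _ Hu')].
    replace (sg ++ c1 :: u') with ((sg ++ [c1]) ++ u') by (rewrite <- app_assoc; auto).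
    apply pe_app_r. eapply rt_trans. apply (pe_sym _ _ Hg1). auto. }
  destruct (DC _ _ HE sg c1 u' eq_refl) as (V' & R' & EV & HV).
  rewrite (cp_ptd_full _ _ Psg) in HV.
  assert (Hrin : In r (cparts a1)) by auto.
  assert (Ha1c1 : a1 <> c1).
  { intros ->. unfold c1 in Hrin; simpl in Hrin. tauto. }
  assert (HR' : length R' >= length [a1]).
  { destruct R' as [|x R'']; simpl; [|lia]. exfalso.
    assert (last (cp t [a1]) c1 = c1) by (rewrite EV; apply last_last).
    rewrite last_cp in H. auto. }
  destruct (cp_occ _ _ _ _ _ EV HR') as (t0 & Th' & Et & Hsh & EV' & ER).
  assert (Hpast1 : pe (sg ++ [c1]) (cp t0 [c1])).
  { eapply rt_trans. apply HV. rewrite EV'. rewrite (cp_eq _ [c1]), (cp_eq t0 [c1]).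
    change (c1 :: cp Th' [a1]) with ([c1] ++ cp Th' [a1]). rewrite cpK_idem. apply rt_refl. }
  assert (Hc1p : In p (tparts [c1])) by (unfold c1, tparts; simpl; auto).
  assert (HpT0 : hist p t0 = hist p sg).
  { pose proof (pe_hist p _ _ Hpast1) as E. rewrite cp_eq, !hist_app, hist_cpK in E by auto.
    assert (Hi : involves p c1 = true) by (unfold c1; simpl; rewrite Nat.eqb_refl; auto).
    rewrite hist_single, Hi in E. apply app_inj_tail in E. destruct E; auto. }
  assert (Hpast2 : pe (sg ++ [c2]) (cp t0 [c2])).
  { rewrite cp_eq. assert (E : cpK t0 [c2] = cpK t0 [c1]) by (apply cpK_parts; auto). rewrite E.
    rewrite cp_eq in Hpast1. pose proof (cp_ptd t0 c1) as Pt. rewrite cp_eq in Pt.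
    destruct (pe_cancel_last _ _ (pe_sym _ _ Hpast1) Pt _ _ eq_refl) as [Y' [E1 E2]].
    apply app_inj_tail in E1. destruct E1 as [<- _]. apply pe_app_r. apply pe_sym. auto. }
  destruct Hev2 as (t' & b' & Htr' & Hgb). apply perm_pe in Hgb. unfold ev in Hgb.
  assert (Hpb : pe (cp t' [b']) (sg ++ [c2])).
  { eapply rt_trans. apply (pe_sym _ _ Hgb). auto. }
  assert (Eb : b' = c2).
  { pose proof (pe_last_ptd _ _ Hpb (cp_ptd t' b') c1) as E. rewrite last_cp, last_last in E. auto. }
  subst b'.
  assert (HpT' : hist p t' = hist p sg).
  { pose proof (pe_hist p _ _ Hpb) as E. rewrite cp_eq, !hist_app, hist_cpK in E
      by (unfold c2, tparts; simpl; auto).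
    assert (Hi : involves p c2 = true) by (unfold c2; simpl; rewrite Nat.eqb_refl; auto).
    rewrite hist_single, Hi in E. apply app_inj_tail in E. destruct E; auto. }
  destruct (trace_reach _ _ Htr) as [He Hre]. rewrite Et in Hre.
  replace ((t0 ++ c1 :: Th') ++ [a1]) with (t0 ++ c1 :: (Th' ++ [a1])) in Hre
    by (rewrite <- app_assoc; auto).
  apply reach_app in Hre. destruct Hre as [N [HrN HrN']].
  inversion HrN' as [|p0 q0 bs l0 H1 W0 H0 Hin1 HrH1]; subst.
  destruct (trace_reach _ _ Htr') as [He' Hre']. apply reach_app in Hre'.
  destruct Hre' as [N' [HrN2 HrN2']].
  destruct (reach_step_inv _ _ _ HrN2') as (p' & q' & bs' & l' & EN' & Ec & Hin2').
  subst N'. unfold c2 in Ec. injection Ec; intros; subst p' q' l'.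
  assert (WN : gwf (GMsg p q bs)) by (eapply gwf_sub; [exact Hwf|eapply reach_subtree; eauto]).
  assert (WN' : gwf (GMsg p q bs')) by (eapply gwf_sub; [exact Hwf|eapply reach_subtree; eauto]).
  destruct (Hpr p) as [Pp HPp].
  pose proof (proj_walk _ _ _ p Pp HrN Hwf HPp) as PN.
  pose proof (proj_walk _ _ _ p Pp HrN2 Hwf HPp) as PN'.
  rewrite HpT0 in PN. rewrite HpT' in PN'.
  destruct (proj_match _ _ _ _ _ _ _ _ WN WN' PN PN' (or_introl eq_refl) (or_introl eq_refl))
    as [_ [_ Hlab]].
  assert (Hl2 : In l2 (map fst bs)). { rewrite Hlab. apply in_map_iff. exists (l2, He'). auto. }
  apply in_map_iff in Hl2. destruct Hl2 as [[l2' H2] [El2 Hin2]]. simpl in El2. subst l2'.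
  set (X := fun z => (z =? p) || (z =? q)).
  assert (HXr : X r = false).
  { unfold X. apply orb_false_iff. split; apply Nat.eqb_neq; auto. }
  assert (Htaint : taint X (Th' ++ [a1]) r = true).
  { assert (Ht : touches X (cp Th' [a1])).
    { apply shares_iff in Hsh. destruct Hsh as [x [Hx1 Hx2]]. exists x. split; auto.
      unfold X. unfold c1 in Hx1; simpl in Hx1.
      destruct Hx1 as [<-|[<-|[]]]; rewrite Nat.eqb_refl, ?orb_true_r; auto. }
    apply taint_cp in Ht. destruct Ht as [x [Hx1 Hx2]].
    rewrite taint_app. destruct a1 as [[a b0] l]. cbn [taint].
    rewrite upd_in by (apply in_cparts; auto).
    unfold tparts in Hx1; simpl in Hx1. destruct Hx1 as [<-|[<-|[]]]; rewrite Hx2, ?orb_true_r; auto. }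
  assert (Hproj : forall z, X z = false -> exists Z, proj H1 z Z /\ proj H2 z Z).
  { intros z Hz. destruct (Hpr z) as [Pz HPz].
    pose proof (proj_walk _ _ _ z Pz HrN Hwf HPz) as Pzn.
    assert (Ei : forall l, involves z (p, q, l) = false) by (intros; exact Hz).
    exists (pstate Pz (hist z t0)). split.
    - pose proof (proj_step _ _ _ _ _ _ _ WN Pzn Hin1) as P1. rewrite Ei in P1. auto.
    - pose proof (proj_step _ _ _ _ _ _ _ WN Pzn Hin2) as P2. rewrite Ei in P2. auto. }
  destruct (realize H1 H2 X (Th' ++ [a1]) r (gwf_child _ _ _ _ _ WN Hin1) (gwf_child _ _ _ _ _ WN Hin2)
              Hproj (ex_intro _ He HrH1) HXr Htaint)
    as (tf & Hf & Hrf & Hhf & Htf & rho & d & Etf & Hdr).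
  subst tf. unfold Hz in Hhf. rewrite !hist_app, !hist_single, Hdr in Hhf.
  assert (Hra1 : involves r a1 = true) by (apply in_cparts; auto).
  rewrite Hra1 in Hhf. apply app_inj_tail in Hhf. destruct Hhf as [Hhr ->].
  exists (cpK (t0 ++ c2 :: rho) [a1]).
  assert (Hev : ev (t0 ++ c2 :: rho) a1 = cpK (t0 ++ c2 :: rho) [a1] ++ [a1]) by apply cp_eq.
  split; [|split].
  - exists (t0 ++ c2 :: rho), a1. split.
    + eapply reach_trace; [|intros E; apply app_eq_nil in E; destruct E; discriminate].
      rewrite <- app_assoc. apply reach_app. exists (GMsg p q bs). split; [exact HrN|].
      simpl. apply (r_cons p q bs l2 H2 (rho ++ [a1]) Hf); auto.
    + rewrite Hev. apply rst_refl.
  -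
    assert (Hsh2 : shares c2 (cp rho [a1]) = true).
    { assert (Ht : touches (taint X rho) [a1]).
      { rewrite taint_app in Htf. destruct a1 as [[a b0] l]. cbn [taint] in Htf.
        rewrite upd_in in Htf by auto. apply orb_true_iff in Htf.
        destruct Htf as [Ht|Ht]; [exists a|exists b0]; split; auto; unfold tparts; simpl; auto. }
      apply taint_cp in Ht. destruct Ht as [x [Hx1 Hx2]]. apply shares_iff. exists x. split; auto.
      unfold X in Hx2. apply orb_true_iff in Hx2. rewrite !Nat.eqb_eq in Hx2.
      unfold c2; simpl. destruct Hx2; auto. }
    destruct (cp_split t0 [c2] (cp rho [a1])) as [s' Hs'].
    exists (cp t0 [c2]), s'. split.
    + apply pe_perm. eapply rt_trans. apply Hg2. auto.
    + apply pe_perm. rewrite <- Hev. unfold ev. rewrite cp_app. simpl. rewrite Hsh2. exact Hs'.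
  -
    rewrite tproj_cpK by (unfold tparts; simpl; rewrite app_nil_r; auto).
    pose proof (pe_tproj _ _ r Hs1) as E. rewrite cp_eq, !tproj_app, tproj_cpK in E
      by (unfold tparts; simpl; rewrite app_nil_r; auto).
    apply app_inv_tail in E. rewrite E, !tproj_app.
    f_equal. unfold c1, c2. simpl.
    destruct (r =? p) eqn:E1; [apply Nat.eqb_eq in E1; congruence|].
    destruct (r =? q) eqn:E2; [apply Nat.eqb_eq in E2; congruence|].
    rewrite (tproj_hist rho), (tproj_hist Th'), Hhr. auto.
Qed.
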